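(* Let $F$ be a Ferrers diagram of semiperimeter $n+1$ and $T\in\mathsf{EWtab}(F)$. For $j\in[1,n]$ let $\nu_j(T)$ be the number of non-cornersupport $0$s in the row labeled $j$ of $T$ if $j\in\mathsf{rows}(F)$, and the number of non-cornersupport $1$s in the column labeled $j$ of $T$ if $j\in\mathsf{cols}(F)$. Then $\nu_j(T)=\mu_j(\phi_{TC}(T))$ for all $j\in[1,n]$.
   Context: Ferrers diagrams and graphs: a Ferrers diagram $F$ (English convention) of semiperimeter $n+1$ has rows and columns labeled by $0,\ldots,n$: the $n+1$ unit steps of its south-east boundary path, traversed from top-right to bottom-left, are labeled $0,\ldots,n$; a vertical step labels the row it bounds, a horizontal step the column it bounds (top row labeled $0$). $\mathsf{rows}(F)$, $\mathsf{cols}(F)$ are the label sets; $F$ has a cell in row $i$, column $j$ iff $i<j$. $G(F)$ has vertex set $\{0,\ldots,n\}$ with edges $\{i,j\}$ for $i\in\mathsf{rows}(F)$, $j\in\mathsf{cols}(F)$, $i<j$. Sandpile model on $G(F)$ with sink $0$: configurations $c\in\mathbb{N}^n$; non-sink $v$ unstable if $c_v\ge\deg(v)$; toppling sends one grain to each neighbour (grains to $0$ disappear); toppling the sink adds one grain to each neighbour of $0$. Recurrent: stable configurations obtainable from $c_v=\deg(v)-1$ by adding grains and stabilizing; $\mathsf{Rec}^{\mathsf{min}}(G)$: recurrent configurations of minimal total grain count. Canonical toppling of a recurrent $c$: topple the sink ($U^{(0)}_c=\{0\}$), then alternately topple simultaneously all unstable vertices in $\mathsf{cols}(F)$ ($V^{(1)}_c$),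 all unstable in $\mathsf{rows}(F)$ ($U^{(1)}_c$), etc.; $\mathsf{CanonTop}(c)=(U^{(0)}_c,V^{(1)}_c,U^{(1)}_c,\ldots)$ is an ordered partition of $\{0,\ldots,n\}$. For $c\in\mathsf{Rec}^{\mathsf{min}}(G(F))$ and $j\in[1,n]$: $\mu_j(c)=|\{k\in V^{(\ell)}_c: k>j\}|$ if $j\in U^{(\ell)}_c$, and $\mu_j(c)=|\{k\in U^{(\ell-1)}_c: k<j\}|$ if $j\in V^{(\ell)}_c$. EW-tableaux: $0/1$-fillings $T$ of $F$ ($T_{ij}$ = entry in row $i$, column $j$) with top row all 1s, a 0 in every other row, and no rectangle with 0s in two diagonally opposite corners and 1s in the other two; $\mathsf{EWtab}(F)$ is their set. $\phi_{TC}(T)$ is the configuration with $c_i$ = number of 1s in row $i$ ($i\in\mathsf{rows}(F)$), $c_i$ = number of 0s in column $i$ ($i\in\mathsf{cols}(F)$); it lies in $\mathsf{Rec}^{\mathsf{min}}(G(F))$. $\mathsf{CanonTop}(T):=\mathsf{CanonTop}(\phi_{TC}(T))$. Supplementary tableau $S=S(T)$: the $|\mathsf{rows}(F)|\times|\mathsf{cols}(F)|$ array with $S_{ij}=1$ if row label $i$ lies in an earlier block of $\mathsf{CanonTop}(T)$ than column label $j$, else $0$ (agrees with $T$ on cells of $F$). An entry $x$ of $T$ at $(j,k)$ is a cornersupport entry iff there exist a row $j'\ne j$ and column $k'\ne k$ with $S_{j'k'}\ne x$ and $S_{j'k}=S_{jk'}=x$. *)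

(* Defs.v *)
From mathcomp Require Import all_boot.
Set Implicit Arguments. Unset Strict Implicit. Unset Printing Implicit Defensive.

(* A Ferrers diagram F of semiperimeter n+1 is encoded by (n, r) where
   r : nat -> bool says, for each label i in [0, n], whether the i-th step of
   the south-east boundary path is vertical (r i = true: i is a row label)
   or horizontal (r i = false: i is a column label). *)

Definition cell (n : nat) (r : nat -> bool) (i j : nat) : bool :=
  [&& r i, ~~ r j, i < j & j <= n].

Definition adj (n : nat) (r : nat -> bool) (v w : nat) : bool :=
  [&& v <= n, w <= n &
      (r v && ~~ r w && (v < w)) || (r w && ~~ r v && (w < v))].

Definition deg (n : nat) (r : nat -> bool) (v : nat) : nat :=
  count (adj n r v) (iota 0 n.+1).

(* Configurations on the vertices 0..n are stored as sequences of length
   n+1 (entry v = number of grains on v; the entry at the sink 0 is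
   irrelevant). *)
Definition topple (n : nat) (r : nat -> bool) (S : pred nat) (d : seq nat)
  : seq nat :=
  [seq (if S v then nth 0 d v - deg n r v else nth 0 d v)
       + count (fun w => S w && adj n r v w) (iota 0 n.+1) | v <- iota 0 n.+1].

(* Step t of the canonical toppling: step 0 topples the sink; odd steps
   topple all unstable non-sink column vertices, even steps t >= 2 all
   unstable non-sink row vertices. *)
Definition canon_set (n : nat) (r : nat -> bool) (t : nat) (d : seq nat)
  : pred nat :=
  if t is 0 then pred1 0
  else fun v => [&& 0 < v, v <= n, r v == ~~ odd t & deg n r v <= nth 0 d v].

Fixpoint conf (n : nat) (r : nat -> bool) (c : nat -> nat) (t : nat)
  : seq nat :=
  match t with
  | 0 => mkseq c n.+1
  | t'.+1 => let d := conf n r c t' in topple n r (canon_set n r t' d) d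
  end.

(* The t-th block of CanonTop(c): block 0 = U^(0) = {0},
   block (2l-1) = V^(l), block (2l) = U^(l). *)
Definition block (n : nat) (r : nat -> bool) (c : nat -> nat) (t : nat)
  : pred nat := canon_set n r t (conf n r c t).

Definition Ublk n r c (l : nat) : pred nat := block n r c (2 * l).
Definition Vblk n r c (l : nat) : pred nat := block n r c (2 * l).-1.

Definition blk (n : nat) (r : nat -> bool) (c : nat -> nat) (v : nat) : nat :=
  find (fun t => block n r c t v) (iota 0 (2 * n + 3)).

Definition mu (n : nat) (r : nat -> bool) (c : nat -> nat) (j : nat) : nat :=
  let t := blk n r c j in
  if ~~ odd t then (* j in U^(l), l = t/2 *)
    count (fun k => Vblk n r c t./2 k && (j < k)) (iota 0 n.+1)
  else (* j in V^(l), l = (t+1)/2 *)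
    count (fun k => Ublk n r c (t.+1./2 - 1) k && (k < j)) (iota 0 n.+1).

(* EW-tableaux: T i j is the entry in row i, column j (meaningful on cells). *)
Definition EWtab (n : nat) (r : nat -> bool) (T : nat -> nat -> bool) : Prop :=
  (forall j, cell n r 0 j -> T 0 j) /\
  (forall i, 0 < i <= n -> r i -> exists j, cell n r i j /\ ~~ T i j) /\
  (forall i i' j j', i < i' -> j < j' ->
     cell n r i j -> cell n r i j' -> cell n r i' j -> cell n r i' j' ->
     ~ ((~~ T i j && ~~ T i' j' && T i j' && T i' j) ||
        (T i j && T i' j' && ~~ T i j' && ~~ T i' j))).

Definition phiTC (n : nat) (r : nat -> bool) (T : nat -> nat -> bool)
  : nat -> nat :=
  fun v => if r v then count (fun j => cell n r v j && T v j) (iota 0 n.+1)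
           else count (fun i => cell n r i v && ~~ T i v) (iota 0 n.+1).

Definition supp (n : nat) (r : nat -> bool) (T : nat -> nat -> bool)
  (i j : nat) : bool :=
  blk n r (phiTC n r T) i < blk n r (phiTC n r T) j.

Definition cornersupport (n : nat) (r : nat -> bool) (T : nat -> nat -> bool)
  (j k : nat) : bool :=
  let x := T j k in
  has (fun j' => has (fun k' =>
        [&& r j', j' != j, ~~ r k', k' != k,
            supp n r T j' k' != x, supp n r T j' k == x
          & supp n r T j k' == x]) (iota 0 n.+1)) (iota 0 n.+1).

Definition nu (n : nat) (r : nat -> bool) (T : nat -> nat -> bool) (j : nat)
  : nat :=
  if r j then
    count (fun k => cell n r j k && ~~ T j k && ~~ cornersupport n r T j k)
          (iota 0 n.+1)
  else
    count (fun i => cell n r i j && T i j && ~~ cornersupport n r T i j)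
          (iota 0 n.+1).

(* Main.v *)
Require Import Defs.
From mathcomp Require Import all_boot.
From mathcomp Require Import zify.
Set Implicit Arguments. Unset Strict Implicit. Unset Printing Implicit Defensive.

Lemma count_or (s : seq nat) (a b : pred nat) :
  (forall x, x \in s -> ~~ (a x && b x)) ->
  count (fun x => a x || b x) s = count a s + count b s.
Proof.
elim: s => //= x s IH H.
rewrite IH; last by move=> y ys; apply: H; rewrite in_cons ys orbT.
move: (H x (mem_head _ _)).
case: (a x); case: (b x) => //= _; lia.
Qed.

Lemma count_split (s : seq nat) (a b : pred nat) :
  count a s = count (fun x => a x && b x) s + count (fun x => a x && ~~ b x) s.
Proof.
elim: s => //= x s ->. case: (a x); case: (b x) => /=; lia.
Qed.

Lemma count_le_in (s : seq nat) (a b : pred nat) :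
  (forall x, x \in s -> a x -> b x) -> count a s <= count b s.
Proof.
elim: s => //= y s IH H.
have := IH (fun z zs => H z (introT orP (or_intror zs) : z \in y :: s)).
have : a y ==> b y by apply/implyP; apply: H; exact: mem_head. case: (a y); case: (b y) => //= _; lia.
Qed.

Lemma count_lt_in (s : seq nat) (a b : pred nat) :
  (forall x, x \in s -> a x -> b x) -> (exists2 x, x \in s & b x && ~~ a x) ->
  count a s < count b s.
Proof.
elim: s => [|y s IH] H [x xs Hx] //=.
have Hs := fun z zs => H z (introT orP (or_intror zs) : z \in y :: s).
move: xs; rewrite in_cons => /orP [/eqP Exy | xs].
  subst x. have := count_le_in Hs. move: Hx. case: (a y); case: (b y) => //= _; lia.
have := IH Hs (ex_intro2 _ _ x xs Hx).
have : a y ==> b y by apply/implyP; apply: H; exact: mem_head. case: (a y); case: (b y) => //= _; lia.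
Qed.

Lemma sub_count_eq (s : seq nat) (a b : pred nat) :
  (forall x, x \in s -> a x -> b x) -> count b s <= count a s ->
  forall x, x \in s -> b x -> a x.
Proof.
move=> H Hc x xs bx; case ax: (a x) => //.
have nax : ~~ a x by rewrite ax.
have := count_lt_in H (ex_intro2 _ _ x xs (introT andP (conj bx nax))).
lia.
Qed.

Section Acyc.
Variables (n : nat) (r : nat -> bool) (T : nat -> nat -> bool).
Hypothesis EW3 : forall i i' j j', i < i' -> j < j' ->
     cell n r i j -> cell n r i j' -> cell n r i' j -> cell n r i' j' ->
     ~ ((~~ T i j && ~~ T i' j' && T i j' && T i' j) ||
        (T i j && T i' j' && ~~ T i j' && ~~ T i' j)).

Definition ed (u v : nat) : bool :=
  (cell n r u v && T u v) || (cell n r v u && ~~ T v u).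

Lemma ed_r u v : ed u v -> r u != r v.
Proof. by rewrite /ed /cell; case: (r u); case: (r v); rewrite ?andbF ?andbT. Qed.

Lemma ed_rowcol i k : r i -> ed i k = cell n r i k && T i k.
Proof. by move=> ri; rewrite /ed /cell ri /= andbF orbF. Qed.

Lemma ed_colrow k i : r i -> ed k i = cell n r i k && ~~ T i k.
Proof. by move=> ri; rewrite /ed /cell ri /= andbF. Qed.

Lemma max_row (s : seq nat) : has r s ->
  exists2 x, x \in s & r x && all (fun y => r y ==> (y <= x)) s.
Proof.
elim: s => //= y s IH Hh.
case hs: (has r s).
  case: (IH hs) => x xs /andP [rx ax].
  case ry: (r y).
    case: (leqP x y) => hxy.
      exists y; first exact: mem_head.
      rewrite ry leqnn /=; apply/allP => z zs; apply/implyP => rz.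
      by move/allP: ax => /(_ z zs) /implyP /(_ rz) hz; apply: leq_trans hz hxy.
    exists x; first by rewrite in_cons xs orbT.
    by rewrite rx ax andbT /= ltnW.
  exists x; first by rewrite in_cons xs orbT.
  by rewrite rx ax.
have ry : r y by move: Hh; rewrite hs orbF.
exists y; first exact: mem_head.
rewrite ry leqnn /=; apply/allP => z zs; apply/implyP => rz.
by move/negP: hs; case; apply/hasP; exists z.
Qed.

Lemma noclosed (s : seq nat) : cycle ed s -> s = [::].
Proof.
move: {2}(size s) (leqnn (size s)) => m; elim: m s => [|m IH] s.
  by case: s.
case: s => [|x p] // Hs Hc.
have hr : has r (x :: p).
  case rx: (r x); first by rewrite /= rx.
  move: Hc; rewrite /cycle; case: p {Hs} => [|y p] /=.
    by rewrite /ed /cell ltnn !andbF.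
  move=> /andP [exy _]; have := ed_r exy; rewrite rx => ry.
  by move: ry; case: (r y).
case: (max_row hr) => im Hin /andP [ris Hall].
case: (rot_to Hin) => k q Hrot.
have Hc' : cycle ed (im :: q) by rewrite -Hrot rot_cycle.
have Hsz : size q = size p by have := size_rot k (x :: p); rewrite Hrot /= => [[]].
have Hmem : forall z, z \in q -> z \in x :: p.
  by move=> z zq; rewrite -(mem_rot k) Hrot in_cons zq orbT.
clear Hrot; move: Hc'; case/lastP: q Hsz Hmem => [|q1 j1] Hsz Hmem.
  by rewrite /= /ed /cell ltnn !andbF.
rewrite /cycle rcons_path last_rcons => /andP [Hp1 Hj1is].
move: Hj1is; rewrite ed_colrow // => /andP [cj1 Tj1].
have rj1 : r j1 = false by move: cj1; rewrite /cell; case: (r j1); rewrite ?andbF.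
move: Hp1 Hsz Hmem; case/lastP: q1 => [|q2 i0] /=.
  by rewrite ed_rowcol // cj1 (negbTE Tj1) .
rewrite rcons_path last_rcons => /andP [Hp2 Hi0j1] Hsz Hmem.
have ri0 : r i0 by move: Hi0j1; rewrite /ed /cell rj1 /= ?orbF ?andbF ?orbF; case/andP => /andP [-> _].
move: Hi0j1; rewrite ed_rowcol // => /andP [ci0j1 Ti0j1].
move: Hp2 Hsz Hmem; case: q2 => [|j2 q3] /=.
  by move=> /andP [h _]; move: (ed_r h); rewrite ris ri0.
move=> /andP [Hisj2 Hp3] Hsz Hmem.
move: Hisj2; rewrite ed_rowcol // => /andP [cisj2 Tisj2].
have i0in : i0 \in x :: p by apply: Hmem; rewrite in_cons mem_rcons in_cons mem_rcons mem_head !orbT.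
have i0le : i0 <= im by move/allP: Hall => /(_ i0 i0in) /implyP /(_ ri0).
have i0ne : i0 != im by apply/eqP => E; subst i0; rewrite Ti0j1 in Tj1.
have i0lt : i0 < im by rewrite ltn_neqAle i0ne i0le.
have ci0j2 : cell n r i0 j2.
  move: cisj2 ci0j1; rewrite /cell ri0 => /and4P [_ nj2 islt j2n] _.
  by rewrite nj2 j2n (ltn_trans i0lt islt).
case Ti0j2 : (T i0 j2).
  have Hc2 : cycle ed (j2 :: rcons q3 i0).
    by rewrite /cycle rcons_path Hp3 last_rcons ed_rowcol // ci0j2 Ti0j2.
  have Hs2 : size (j2 :: rcons q3 i0) <= m.
    move: Hs Hsz; rewrite /= !size_rcons /= ltnS => Hs Hsz; rewrite -Hsz in Hs; exact: ltnW.
  by have := IH _ Hs2 Hc2.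
have j12 : j1 != j2 by apply/eqP => E; subst j2; rewrite Tisj2 in Tj1.
case: (ltngtP j1 j2) => hj; last by rewrite hj eqxx in j12.
  exfalso; apply: (EW3 i0lt hj ci0j1 ci0j2 cj1 cisj2).
  by rewrite Ti0j1 Tisj2 Ti0j2 (negbTE Tj1).
exfalso; apply: (EW3 i0lt hj ci0j2 ci0j1 cisj2 cj1).
by rewrite Ti0j1 Tisj2 Ti0j2 (negbTE Tj1).
Qed.


Lemma no_pclosed (X : pred nat) :
  (forall x, X x -> x <= n) -> (forall x, X x -> exists u, X u && ed u x) ->
  forall x, ~~ X x.
Proof.
move=> Xle Xcl x; apply/negP => Xx.
pose a v := fun u => X u && ed u v.
pose pr v := nth 0 (iota 0 n.+1) (find (a v) (iota 0 n.+1)).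
have Hpr : forall v, X v -> X (pr v) && ed (pr v) v.
  move=> v Xv; have [u /andP [Xu eu]] := Xcl v Xv.
  have hs : has (a v) (iota 0 n.+1).
    by apply/hasP; exists u; [rewrite mem_iota /= ltnS Xle | rewrite /a Xu eu].
  exact: (nth_find 0 hs).
have Hit : forall k, X (iter k pr x).
  by elim=> [|k IH] //=; case/andP: (Hpr _ IH).
pose s := [seq iter k pr x | k <- iota 0 n.+2].
have nu : ~~ uniq s.
  apply/negP => us.
  have sub : {subset s <= iota 0 n.+1}.
    move=> z /mapP [k _ ->]; rewrite mem_iota /= ltnS; exact: Xle.
  have := uniq_leq_size us sub.
  by rewrite size_map !size_iota ltnn.
case/(uniqPn 0): nu => i [j [ij js Eij]].
move: js; rewrite size_map size_iota => js.
rewrite !(nth_map 0) ?size_iota ?(ltn_trans ij js) // !nth_iota ?(ltn_trans ij js) // !add0n in Eij.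
pose y := iter i pr x.
pose L := j - i.
have Ly : iter L pr y = y.
  by rewrite /y -iterD /L subnK ?(ltnW ij) // Eij.
have L0 : 0 < L by rewrite /L subn_gt0.
have Hc : cycle (frel pr) (traject pr y L).
  move: Ly L0; case: L => [|L'] // Ly _.
  rewrite /= /cycle.
  have -> : rcons (traject pr (pr y) L') y = traject pr (pr y) L'.+1.
    by rewrite trajectSr -iterSr Ly.
  exact: fpath_traject.
have Hall : all X (traject pr y L).
  apply/allP => z /trajectP [k _ ->]; rewrite /y -iterD; exact: Hit.
have Hc2 : cycle (fun u v => ed v u) (traject pr y L).
  apply: (sub_in_cycle _ Hall Hc) => u v Xu Xv /eqP <-.
  by case/andP: (Hpr u Xu).
have := noclosed (s := rev (traject pr y L)).
rewrite rev_cycle => /(_ Hc2) /(congr1 size).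
by rewrite size_rev size_traject /= => HL; rewrite HL in L0.
Qed.

End Acyc.

Lemma half_odd b : odd b -> 2 * (b.+1./2 - 1) = b.-1.
Proof.
move=> hb; have E := odd_double_half b; rewrite hb in E.
move: E; set h := b./2 => E; rewrite -E add1n /= doubleK subn1 /= mul2n.
by [].
Qed.

Section Main.
Variables (n : nat) (r : nat -> bool) (T : nat -> nat -> bool).
Hypothesis r0 : r 0 = true.
Hypothesis EW1 : forall j, cell n r 0 j -> T 0 j.
Hypothesis EW2 : forall i, 0 < i <= n -> r i -> exists j, cell n r i j /\ ~~ T i j.
Hypothesis EW3 : forall i i' j j', i < i' -> j < j' ->
     cell n r i j -> cell n r i j' -> cell n r i' j -> cell n r i' j' ->
     ~ ((~~ T i j && ~~ T i' j' && T i j' && T i' j) ||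
        (T i j && T i' j' && ~~ T i j' && ~~ T i' j)).

Local Notation c := (phiTC n r T).
Local Notation bl t := (block n r (phiTC n r T) t).
Local Notation cf t := (conf n r (phiTC n r T) t).
Local Notation N := n.+1.
Local Notation I := (iota 0 n.+1).

Lemma adj_row v w : r v -> adj n r v w = cell n r v w.
Proof. by move=> rv; rewrite /adj /cell rv /=; case: (r w) => /=; lia. Qed.

Lemma adj_col v w : ~~ r v -> adj n r v w = cell n r w v.
Proof. by move=> rv; rewrite /adj /cell (negbTE rv) /=; case: (r w) => /=; lia. Qed.

Lemma adj_sym v w : adj n r v w = adj n r w v.
Proof. by rewrite /adj andbCA orbC. Qed.

Lemma adj_r v w : adj n r v w -> r v != r w.
Proof. by rewrite /adj; case: (r v); case: (r w); rewrite ?andbF. Qed.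

Lemma adj_le v w : adj n r v w -> (v <= n) && (w <= n).
Proof. by case/and3P => -> ->. Qed.

Lemma cell_le i k : cell n r i k -> [/\ r i, ~~ r k, i < k & k <= n].
Proof. by case/and4P. Qed.

Lemma deg_row v : r v -> deg n r v = count (cell n r v) I.
Proof. by move=> rv; apply: eq_count => w; rewrite adj_row. Qed.

Lemma deg_col v : ~~ r v -> deg n r v = count (fun w => cell n r w v) I.
Proof. by move=> rv; apply: eq_count => w; rewrite adj_col. Qed.

Lemma c_row v : r v -> c v = count (fun j => cell n r v j && T v j) I.
Proof. by move=> rv; rewrite /phiTC rv. Qed.

Lemma c_col v : ~~ r v -> c v = count (fun i => cell n r i v && ~~ T i v) I.
Proof. by move=> rv; rewrite /phiTC (negbTE rv). Qed.

Lemma c_lt_deg v : 0 < v <= n -> c v < deg n r v.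
Proof.
move=> /andP [v0 vn].
case rv: (r v).
  rewrite c_row // deg_row // (count_split I (cell n r v) (T v)).
  have [j [cj Tj]] := EW2 (introT andP (conj v0 vn)) rv.
  have : 0 < count (fun x => cell n r v x && ~~ T v x) I.
    rewrite -has_count; apply/hasP; exists j; last by rewrite cj.
    by case/cell_le: cj => _ _ _ jn; rewrite mem_iota /= ltnS.
  lia.
rewrite c_col ?rv // deg_col ?rv // (count_split I (fun w => cell n r w v) (fun i => T i v)).
have c0 : cell n r 0 v by rewrite /cell r0 rv v0 vn.
have : 0 < count (fun x => cell n r x v && T x v) I.
  rewrite -has_count; apply/hasP; exists 0; first by rewrite mem_iota.
  by rewrite c0 /= EW1.
lia.
Qed.

Lemma conf_size t : size (cf t) = N.
Proof. by case: t => [|t] /=; rewrite ?size_mkseq // /topple size_map size_iota. Qed.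

Lemma nth_conf0 v : v < N -> nth 0 (cf 0) v = c v.
Proof. by move=> vN; rewrite /= nth_mkseq. Qed.

Lemma nth_confS t v : v < N -> nth 0 (cf t.+1) v =
  (if bl t v then nth 0 (cf t) v - deg n r v else nth 0 (cf t) v)
  + count (fun w => bl t w && adj n r v w) I.
Proof. by move=> vN; rewrite /= /topple (nth_map 0) ?size_iota // nth_iota. Qed.

Lemma bl0 v : bl 0 v = (v == 0).
Proof. by []. Qed.

Lemma blS t v : bl t.+1 v =
  [&& 0 < v, v <= n, r v == ~~ odd t.+1 & deg n r v <= nth 0 (cf t.+1) v].
Proof. by []. Qed.

Lemma bl_sink t : bl t 0 = (t == 0).
Proof. by case: t. Qed.

Lemma bl_pos t v : 0 < t -> bl t v ->
  [/\ 0 < v, v <= n, r v = ~~ odd t & deg n r v <= nth 0 (cf t) v].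
Proof.
case: t => // t _; rewrite blS => /and4P [-> -> /eqP -> ->]; done.
Qed.

Lemma bl_le t v : bl t v -> v <= n.
Proof. by case: t => [|t]; [rewrite bl0 => /eqP -> | case/(bl_pos (ltn0Sn t))]. Qed.

Definition fired t v := has (fun s => bl s v) (iota 0 t).

Lemma fired0 v : fired 0 v = false.
Proof. by []. Qed.

Lemma firedS t v : fired t.+1 v = fired t v || bl t v.
Proof. by rewrite /fired -addn1 iotaD has_cat /= orbF. Qed.

Lemma fired_sink t : fired t 0 = (0 < t).
Proof. by elim: t => [|t IH] //; rewrite firedS IH bl_sink; case: t {IH}. Qed.

Lemma fired_mono s t v : s <= t -> fired s v -> fired t v.
Proof.
move=> st; elim: t st => [|t IH]; first by rewrite leqn0 => /eqP ->.
rewrite leq_eqVlt => /orP [/eqP -> // | st] fs.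
by rewrite firedS IH.
Qed.

Definition Inv t := forall v, 0 < v <= n ->
  nth 0 (cf t) v + (if fired t v then deg n r v else 0) =
  c v + count (fun w => fired t w && adj n r v w) I.

Lemma count_adj_le t v : count (fun w => fired t w && adj n r v w) I <= deg n r v.
Proof. by apply: sub_count => w /andP []. Qed.

Lemma fired_notbl t v : Inv t -> 0 < v <= n -> fired t v -> ~~ bl t v.
Proof.
move=> Iv hv; case: t Iv => [|t] Iv //.
move=> ft; apply/negP => /(bl_pos (ltn0Sn t)) [_ _ _ hd].
have := Iv v hv; rewrite ft.
have := count_adj_le t.+1 v. have := c_lt_deg hv. lia.
Qed.

Lemma Inv0 : Inv 0.
Proof.
move=> v /andP [_ vn]; rewrite nth_conf0 ?ltnS //= addn0.
by rewrite (eq_count (a2 := pred0)) ?count_pred0 ?addn0.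
Qed.

Lemma InvS t : Inv t -> Inv t.+1.
Proof.
move=> Iv v hv.
have vN : v < N by case/andP: hv => _; rewrite ltnS.
rewrite nth_confS //.
have -> : count (fun w => fired t.+1 w && adj n r v w) I =
    count (fun w => fired t w && adj n r v w) I + count (fun w => bl t w && adj n r v w) I.
  rewrite -count_or; first by apply: eq_count => w; rewrite firedS andb_orl.
  move=> w _; apply/negP => /andP [/andP [fw aw] /andP [bw _]].
  case: (posnP w) => [w0|wpos].
    by move: fw bw; rewrite w0 fired_sink bl_sink; case: (t).
  have wn : w <= n by case/andP: (adj_le aw).
  by move: (fired_notbl Iv (introT andP (conj wpos wn)) fw); rewrite bw.
have := Iv v hv; rewrite firedS.
case bv: (bl t v).
  have fv : fired t v = false.
    by apply/negP => fv; move: (fired_notbl Iv hv fv); rewrite bv.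
  rewrite fv /=.
  have hd : deg n r v <= nth 0 (cf t) v.
    case: t Iv bv {fv} => [|t] Iv bv.
      by move: bv; rewrite bl0 => /eqP E; move: hv; rewrite E.
    by case/(bl_pos (ltn0Sn t)): bv.
  lia.
rewrite orbF. lia.
Qed.

Lemma Inv_all t : Inv t.
Proof. by elim: t => [|t IH]; [exact: Inv0 | exact: InvS]. Qed.


Definition Bp t := forall i k, cell n r i k ->
  (fired t i -> ~~ fired t k -> T i k) /\ (fired t k -> ~~ fired t i -> ~~ T i k).

Lemma unfired_val t v : 0 < v <= n -> ~~ fired t v ->
  nth 0 (cf t) v = c v + count (fun w => fired t w && adj n r v w) I.
Proof. by move=> hv fv; have := Inv_all t hv; rewrite (negbTE fv) addn0. Qed.

Lemma col_full t k : Bp t -> ~~ r k -> 0 < k <= n -> ~~ fired t k ->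
  deg n r k <= nth 0 (cf t) k -> forall i, cell n r i k -> T i k -> fired t i.
Proof.
move=> B rk hk fk hd i ci Ti.
rewrite unfired_val // c_col // deg_col //
  (count_split I (fun w => cell n r w k) (fun i => T i k)) in hd.
have E : count (fun w => fired t w && adj n r k w) I =
         count (fun w => fired t w && cell n r w k) I.
  by apply: eq_count => w; rewrite adj_col.
rewrite E in hd.
have H1 : forall x, x \in I -> fired t x && cell n r x k -> cell n r x k && T x k.
  by move=> x _ /andP [fx cx]; rewrite cx /=; exact: (proj1 (B _ _ cx) fx fk).
have H2 : count (fun x => cell n r x k && T x k) I <= count (fun w => fired t w && cell n r w k) I.
  by move: hd; rewrite addnC leq_add2l.
have iI : i \in I by case/cell_le: ci => _ _ ik kn; rewrite mem_iota /= ltnS (leq_trans (ltnW ik) kn).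
by case/andP: (sub_count_eq H1 H2 iI (introT andP (conj ci Ti))).
Qed.

Lemma row_full t i : Bp t -> r i -> 0 < i <= n -> ~~ fired t i ->
  deg n r i <= nth 0 (cf t) i -> forall k, cell n r i k -> ~~ T i k -> fired t k.
Proof.
move=> B ri hi fi hd k ck Tk.
rewrite unfired_val // c_row // deg_row //
  (count_split I (cell n r i) (T i)) in hd.
have E : count (fun w => fired t w && adj n r i w) I =
         count (fun w => fired t w && cell n r i w) I.
  by apply: eq_count => w; rewrite adj_row.
rewrite E in hd.
have H1 : forall x, x \in I -> fired t x && cell n r i x -> cell n r i x && ~~ T i x.
  by move=> x _ /andP [fx cx]; rewrite cx /=; exact: (proj2 (B _ _ cx) fx fi).
have H2 : count (fun x => cell n r i x && ~~ T i x) I <= count (fun w => fired t w && cell n r i w) I.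
  by move: hd; rewrite leq_add2l.
have kI : k \in I by case/cell_le: ck => _ _ _ kn; rewrite mem_iota /= ltnS.
by case/andP: (sub_count_eq H1 H2 kI (introT andP (conj ck Tk))).
Qed.

Lemma Bp0 : Bp 0.
Proof. by []. Qed.

Lemma BpS t : Bp t -> Bp t.+1.
Proof.
move=> B i k ci; have [ri rk ik kn] := cell_le ci.
have k0 : 0 < k by exact: leq_ltn_trans (leq0n i) ik.
have hk : 0 < k <= n by rewrite k0 kn.
rewrite !firedS; split.
  move=> /orP [fi | bi]; rewrite negb_or => /andP [fk bk].
    exact: (proj1 (B _ _ ci) fi fk).
  case: t B bi fk bk => [|t] B bi fk bk.
    by move: bi ci; rewrite bl0 => /eqP ->; exact: EW1.
  have [i0 _ _ hd] := bl_pos (ltn0Sn t) bi.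
  have hi : 0 < i <= n by rewrite i0 (leq_trans (ltnW ik) kn).
  have fi : ~~ fired t.+1 i.
    by apply/negP => fi; move: (fired_notbl (Inv_all _) hi fi); rewrite bi.
  apply/negPn/negP => nT.
  by move: fk; rewrite (row_full B ri hi fi hd ci nT).
move=> /orP [fk | bk]; rewrite negb_or => /andP [fi bi].
  exact: (proj2 (B _ _ ci) fk fi).
case: t B bk fi bi => [|t] B bk fi bi.
  by move: bk; rewrite bl0 => /eqP E; rewrite E in k0.
have [_ _ _ hd] := bl_pos (ltn0Sn t) bk.
have fk : ~~ fired t.+1 k.
  by apply/negP => fk; move: (fired_notbl (Inv_all _) hk fk); rewrite bk.
apply/negP => Tk.
by move: fi; rewrite (col_full B rk hk fk hd ci Tk).
Qed.

Lemma Bp_all t : Bp t.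
Proof. by elim: t => [|t IH]; [exact: Bp0 | exact: BpS]. Qed.

Lemma stuck t : 0 < t -> (forall v, v <= n -> ~~ bl t v) ->
  (forall v, v <= n -> ~~ bl t.+1 v) -> forall v, v <= n -> fired t v.
Proof.
move=> t0 H1 H2.
have Fe : forall w, fired t.+1 w = fired t w.
  move=> w; rewrite firedS; case bw: (bl t w); last by rewrite orbF.
  by move: (H1 w (bl_le bw)); rewrite bw.
pose X v := (v <= n) && ~~ fired t v.
have Xle : forall x, X x -> x <= n by move=> x /andP [].
suff Xcl : forall x, X x -> exists u, X u && ed n r T u x.
  by move=> v vn; have := no_pclosed EW3 Xle Xcl v; rewrite /X vn /= negbK.
move=> x /andP [xn fx].
have x0 : 0 < x by case: (posnP x) fx => // ->; rewrite fired_sink t0.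
have hx : 0 < x <= n by rewrite x0 xn.
have [s [s0 Fs rs bs]] : exists s, [/\ 0 < s, forall w, fired s w = fired t w,
    r x == ~~ odd s & ~~ bl s x].
  case h: (r x == ~~ odd t).
    by exists t; split => //; exact: H1.
  exists t.+1; split => //; last exact: H2.
  by move/negbT: h => /=; case: (r x); case: (odd t).
have ns : nth 0 (cf s) x < deg n r x.
  rewrite ltnNge; move: bs; case: (s) s0 rs => // s' _ rs.
  by rewrite blS x0 xn rs.
have fxs : ~~ fired s x by rewrite Fs.
rewrite (unfired_val hx fxs) in ns.
case rx: (r x).
  case: (boolP (has (fun k => cell n r x k && ~~ T x k && ~~ fired s k) I)).
    case/hasP => k _ /andP [/andP [ck Tk] fk].
    exists k; rewrite /X -Fs fk ed_colrow // ck Tk andbT.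
    by case/cell_le: ck => _ _ _ ->.
  move/hasPn => Hn; exfalso.
  have H3 : forall k, k \in I -> cell n r x k && ~~ T x k -> fired s k && adj n r x k.
    move=> k kI hk; have := Hn k kI; rewrite hk /= negbK => ->.
    by rewrite adj_row // (andP hk).1.
  have : count (fun k => cell n r x k && ~~ T x k) I <=
         count (fun w => fired s w && adj n r x w) I := count_le_in H3.
  move: ns; rewrite c_row // deg_row // (count_split I (cell n r x) (T x)).
  lia.
case: (boolP (has (fun i => cell n r i x && T i x && ~~ fired s i) I)).
  case/hasP => i _ /andP [/andP [ci Ti] fi].
  have [ri _ _ _] := cell_le ci.
  exists i; rewrite /X -Fs fi ed_rowcol // ci Ti andbT /=.
  case/cell_le: ci => _ _ ix _; by rewrite (leq_trans (ltnW ix) xn).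
move/hasPn => Hn; exfalso.
have H3 : forall i, i \in I -> cell n r i x && T i x -> fired s i && adj n r x i.
  move=> i iI hi; have := Hn i iI; rewrite hi /= negbK => ->.
  by rewrite adj_col ?rx // (andP hi).1.
have : count (fun i => cell n r i x && T i x) I <=
       count (fun w => fired s w && adj n r x w) I := count_le_in H3.
move: ns; rewrite c_col ?rx // deg_col ?rx // (count_split I (fun w => cell n r w x) (fun i => T i x)).
lia.
Qed.

Definition U t := count (fun v => ~~ fired t v) I.

Lemma progress t : 0 < t -> 0 < U t -> U t.+2 < U t.
Proof.
move=> t0 Ut.
case: (boolP (has (fun v => bl t v || bl t.+1 v) I)).
  case/hasP => v vI hv.
  apply: count_lt_in.
    by move=> x _; apply: contra; apply: fired_mono; rewrite ltnW.
  exists v => //.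
  have vn : v <= n by case/orP: hv => /bl_le.
  case/orP: hv => bv.
    have [v0 _ _ _] := bl_pos t0 bv.
    have hv : 0 < v <= n by rewrite v0 vn.
    have fv : ~~ fired t v by apply/negP => fv; move: (fired_notbl (Inv_all _) hv fv); rewrite bv.
    by rewrite fv !firedS bv orbT.
  have [v0 _ _ _] := bl_pos (ltn0Sn t) bv.
  have hv : 0 < v <= n by rewrite v0 vn.
  have fv : ~~ fired t.+1 v by apply/negP => fv; move: (fired_notbl (Inv_all _) hv fv); rewrite bv.
  rewrite firedS bv orbT andbT.
  by apply: contra fv; apply: fired_mono.
move/hasPn => Hn; exfalso.
have := stuck t0 _ _.
have H1 : forall v, v <= n -> ~~ bl t v.
  by move=> v vn; have := Hn v; rewrite mem_iota /= ltnS vn negb_or => /(_ isT) /andP [].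
have H2 : forall v, v <= n -> ~~ bl t.+1 v.
  by move=> v vn; have := Hn v; rewrite mem_iota /= ltnS vn negb_or => /(_ isT) /andP [].
move=> /(_ H1 H2) Hf.
move: Ut; rewrite /U -has_count => /hasP [v]; rewrite mem_iota /= ltnS => vn.
by rewrite Hf.
Qed.

Lemma U1 : U 1 <= n.
Proof.
have cc : forall (a : pred nat) x s, count a (x :: s) = a x + count a s by [].
rewrite /U (_ : iota 0 n.+1 = 0 :: iota 1 n) // cc fired_sink add0n.
by apply: leq_trans (count_size _ _) _; rewrite size_iota.
Qed.

Lemma U_bound m : U (2 * m + 1) <= n - m.
Proof.
elim: m => [|m IH]; first by rewrite muln0 add0n subn0 U1.
have -> : 2 * m.+1 + 1 = (2 * m + 1).+2 by rewrite mulnS; lia.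
case: (posnP (U (2 * m + 1))) => hU.
  have : U (2 * m + 1).+2 <= U (2 * m + 1).
    apply: count_le_in => x _; apply: contra; apply: fired_mono; lia.
  lia.
have := progress (ltn0Sn _ : 0 < (2 * m).+1) _. rewrite addn1 in hU IH *.
move=> /(_ hU). lia.
Qed.

Lemma all_fired v : v <= n -> fired (2 * n + 1) v.
Proof.
move=> vn; have := U_bound n; rewrite subnn leqn0 => /eqP H.
apply/negPn/negP => fv.
have : 0 < U (2 * n + 1).
  rewrite /U -has_count; apply/hasP; exists v; last by rewrite fv.
  by rewrite mem_iota /= ltnS.
by rewrite H.
Qed.

Local Notation bk v := (blk n r (phiTC n r T) v).

Lemma blk_spec v : v <= n ->
  [/\ bk v < 2 * n + 3, bl (bk v) v & forall s, s < bk v -> ~~ bl s v].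
Proof.
move=> vn; have hf := all_fired vn.
have hs : has (fun t => bl t v) (iota 0 (2 * n + 3)).
  case/hasP: hf => s; rewrite mem_iota /= => sl bs.
  apply/hasP; exists s => //; rewrite mem_iota /=; lia.
have fl : find (fun t => bl t v) (iota 0 (2 * n + 3)) < 2 * n + 3.
  by move: hs; rewrite has_find size_iota.
rewrite /blk; split => //.
  by have := nth_find 0 hs; rewrite nth_iota.
move=> s sl; have := before_find 0 sl; rewrite nth_iota ?add0n => [->//|].
exact: ltn_trans sl fl.
Qed.

Lemma blk0 : bk 0 = 0.
Proof. by have [_ h _] := blk_spec (leq0n n); move: h; rewrite bl_sink => /eqP. Qed.

Lemma blockE v s : v <= n -> bl s v = (s == bk v).
Proof.
move=> vn; have [_ hb hbef] := blk_spec vn.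
case: (ltngtP s (bk v)) => h.
- by apply/negbTE; apply: hbef.
- case: (posnP v) => [v0|v0].
    by move: h; rewrite v0 blk0 bl_sink => h; rewrite eqn0Ngt h.
  have fv : fired s v by apply/hasP; exists (bk v) => //; rewrite mem_iota.
  have hv : 0 < v <= n by rewrite v0 vn.
  by apply/negbTE; apply: fired_notbl (Inv_all _) hv fv.
- by rewrite h.
Qed.

Lemma firedE t v : v <= n -> fired t v = (bk v < t).
Proof.
move=> vn; rewrite /fired (eq_has (a2 := pred1 (bk v))); last by move=> s; rewrite /= blockE.
by rewrite has_pred1 mem_iota.
Qed.

Lemma parity v : v <= n -> odd (bk v) = ~~ r v.
Proof.
move=> vn; have [_ hb _] := blk_spec vn.
move: hb; case E: (bk v) => [|t] hb.
  by move: hb; rewrite bl0 => /eqP ->; rewrite r0.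
by case: (bl_pos (ltn0Sn t) hb) => _ _ -> _; rewrite negbK.
Qed.

Lemma bk_pos v : 0 < v <= n -> 0 < bk v.
Proof.
case/andP => v0 vn; have [_ hb _] := blk_spec vn.
by move: hb; case: (bk v) => // /eqP E; rewrite E in v0.
Qed.

Lemma Tblk i k : cell n r i k -> T i k = (bk i < bk k).
Proof.
move=> ci; have [ri rk ik kn] := cell_le ci.
have inn : i <= n by exact: leq_trans (ltnW ik) kn.
have pi := parity inn; have pk := parity kn.
case: (ltngtP (bk i) (bk k)) => h.
- have := proj1 (Bp_all (bk k) ci); rewrite !firedE // h ltnn; by apply.
- have := proj2 (Bp_all (bk i) ci); rewrite !firedE // h ltnn => /(_ isT isT) /negbTE.
  done.
- by move: pi pk; rewrite h ri => ->; rewrite rk.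
Qed.

Lemma Cpred v : 0 < v <= n -> exists u, [/\ u <= n, adj n r v u & bk u = (bk v).-1].
Proof.
move=> hv; have /andP [v0 vn] := hv.
have [_ hb _] := blk_spec vn.
have bp := bk_pos hv.
have pv := parity vn.
move: hb pv bp; case E: (bk v) => [|t'] hb pv bp //.
case: t' E hb pv bp => [|t] E hb pv bp.
  exists 0; split => //; last by rewrite blk0.
  have rv : r v = false by move: pv; case: (r v).
  by rewrite adj_col ?rv // /cell r0 rv v0 vn.
have hs : c v + count (fun w => fired t w && adj n r v w) I < deg n r v.
  case: t E hb pv {bp} => [|t] E hb pv.
    rewrite (eq_count (a2 := pred0)) ?count_pred0 ?addn0; last by [].
    exact: c_lt_deg.
  have nb : ~~ bl t.+1 v by rewrite (blockE t.+1 vn) E; apply/eqP; lia.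
  have fv : ~~ fired t.+1 v by rewrite firedE // E; lia.
  rewrite -(unfired_val hv fv) ltnNge.
  move: nb; rewrite blS v0 vn /=.
  have rv : r v = odd t by move: pv => /=; case: (r v); case: (odd t).
  by rewrite rv negbK eqxx.
have ht : deg n r v <= c v + count (fun w => fired t.+2 w && adj n r v w) I.
  have fv : ~~ fired t.+2 v by rewrite firedE // E ltnn.
  rewrite -(unfired_val hv fv).
  by case: (bl_pos (ltn0Sn _) hb).
have [w wI /andP [/andP [fw aw] nfw]] :
    exists2 w, w \in I & fired t.+2 w && adj n r v w && ~~ fired t w.
  apply/hasP; apply/negPn/negP => /hasPn Hn.
  have : count (fun w => fired t.+2 w && adj n r v w) I <=
         count (fun w => fired t w && adj n r v w) I.
    apply: count_le_in => x xI /andP [fx ax].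
    by have := Hn x xI; rewrite fx ax /= negbK => ->.
  lia.
have /andP [_ wn] := adj_le aw.
exists w; split => //.
move: fw nfw; rewrite !firedE // -leqNgt => h1 h2.
have pw := parity wn.
have rvw := adj_r aw.
have : bk w != t.
  apply/eqP => Ew; move: pw pv rvw; rewrite Ew /= negbK.
  by case: (odd t); case: (r v); case: (r w).
lia.
Qed.

Lemma main_eq j : 0 < j <= n -> nu n r T j = mu n r (phiTC n r T) j.
Proof.
move=> hj; have /andP [j0 jn] := hj.
have pj := parity jn.
have bj := bk_pos hj.
rewrite /nu /mu pj negbK.
case rj: (r j).
-
  have Ht : (2 * (bk j)./2).-1 = (bk j).-1.
    by move: pj; rewrite rj => /= hp; have := odd_double_half (bk j); rewrite hp add0n mul2n => ->.
  rewrite /Vblk Ht.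
  apply: eq_in_count => k; rewrite mem_iota /= ltnS => kn.
  rewrite (blockE _ kn).
  apply/idP/idP.
  + case/andP => /andP [cjk nT] ncs.
    have [_ rk jk _] := cell_le cjk.
    rewrite jk andbT; apply/negPn/negP => hne.
    have hlt : bk k < bk j.
      move: nT; rewrite (Tblk cjk) -leqNgt leq_eqVlt => /orP [/eqP E|//].
      by move: (parity kn) pj; rewrite E rj (negbTE rk) => ->.
    move/negP: ncs; apply.
    have [k' [k'n ajk' bk']] := Cpred hj.
    have rk' : r k' = false by move: (adj_r ajk'); rewrite rj; case: (r k').
    have k'0 : 0 < k' by case: (posnP k') bk' => // ->; rewrite blk0; lia.
    have [j' [j'n ak'j' bj']] := Cpred (introT andP (conj k'0 k'n)).
    have rj' : r j' by move: (adj_r ak'j'); rewrite rk'; case: (r j').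
    apply/hasP; exists j'; first by rewrite mem_iota /= ltnS.
    apply/hasP; exists k'; first by rewrite mem_iota /= ltnS.
    rewrite /supp (Tblk cjk) rj' rk' /=.
    have e1 : j' != j by apply/eqP => E; move: bj'; rewrite bk' E; lia.
    have e2 : k' != k by apply/eqP => E; move: bk'; rewrite E => E2; rewrite E2 in hne; rewrite eqxx in hne.
    rewrite e1 e2 /=.
    rewrite bj' bk'; apply/and3P; split; apply/eqP; lia.
  + case/andP => /eqP Ek jk.
    have rk : r k = false.
      have := parity kn; rewrite -Ek; move: pj bj; rewrite rj.
      by case: (bk j) => // b /=; case: (odd b); case: (r k).
    have cjk : cell n r j k by rewrite /cell rj rk jk kn.
    rewrite cjk (Tblk cjk) -Ek /=.
    have -> : (bk j < (bk j).-1) = false by lia.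
    apply/negP; rewrite /cornersupport (Tblk cjk) -Ek.
    have -> : (bk j < (bk j).-1) = false by lia.
    case/hasP => j' j'I /hasP [k' k'I].
    rewrite /supp -Ek => /and5P [rj' _ _ _ /and3P [h1 h2 h3]].
    move: j'I; rewrite mem_iota /= ltnS => j'n.
    have E : bk j' = bk k.
      move: h1 h2 h3; rewrite -Ek; case: (ltnP (bk j') (bk k')) => //= ? ? ?; lia.
    by move: (parity j'n) (parity kn); rewrite E rj' rk => ->.
-
  have Ht : 2 * ((bk j).+1./2 - 1) = (bk j).-1.
    by apply: half_odd; rewrite pj rj.
  rewrite /Ublk Ht.
  apply: eq_in_count => i; rewrite mem_iota /= ltnS => inn.
  rewrite (blockE _ inn).
  apply/idP/idP.
  + case/andP => /andP [cij Ti] ncs.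
    have [ri _ ij _] := cell_le cij.
    rewrite ij andbT; apply/negPn/negP => hne.
    have hlt : bk i < bk j by rewrite -(Tblk cij).
    move/negP: ncs; apply.
    have [j' [j'n ajj' bj']] := Cpred hj.
    have rj' : r j' by move: (adj_r ajj'); rewrite rj; case: (r j').
    have j'0 : 0 < j' by case: (posnP j') bj' => // ->; rewrite blk0; lia.
    have [k' [k'n aj'k' bk']] := Cpred (introT andP (conj j'0 j'n)).
    have rk' : r k' = false by move: (adj_r aj'k'); rewrite rj'; case: (r k').
    have hik : bk i != bk k'.
      by apply/eqP => E; move: (parity inn) (parity k'n); rewrite E ri rk' => ->.
    apply/hasP; exists j'; first by rewrite mem_iota /= ltnS.
    apply/hasP; exists k'; first by rewrite mem_iota /= ltnS.
    rewrite /supp (Tblk cij) rj' rk' /=.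
    have e1 : j' != i by apply/eqP => E; rewrite -E bj' in hne; rewrite eqxx in hne.
    have e2 : k' != j by apply/eqP => E; move: bk'; rewrite bj' E; lia.
    rewrite e1 e2 /=.
    move: hik; rewrite bk' bj' => hik.
    rewrite hlt; apply/and3P; split; apply/eqP; lia.
  + case/andP => /eqP Ei ij.
    have ri : r i.
      have := parity inn; rewrite -Ei; move: pj bj; rewrite rj.
      by case: (bk j) => // b /=; case: (odd b); case: (r i).
    have cij : cell n r i j by rewrite /cell ri rj ij jn.
    rewrite cij (Tblk cij) -Ei /=.
    have -> : ((bk j).-1 < bk j) = true by lia.
    apply/negP; rewrite /cornersupport (Tblk cij) -Ei.
    have -> : ((bk j).-1 < bk j) = true by lia.
    case/hasP => j' j'I /hasP [k' k'I].
    rewrite /supp -Ei => /and5P [_ _ _ _ /and3P [h1 h2 h3]].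
    move: h1 h2 h3; case: (ltnP (bk j') (bk k')) => //= ? /eqP ? /eqP ?; lia.
Qed.

End Main.

Theorem lemma4p11 (n : nat) (r : nat -> bool) (T : nat -> nat -> bool) :
  r 0 = true -> r n = false -> EWtab n r T ->
  forall j, 0 < j <= n -> nu n r T j = mu n r (phiTC n r T) j.
Proof.
move=> r0 _ [EW1 [EW2 EW3]] j hj.
exact: (main_eq r0 EW1 EW2 EW3 hj).
Qed.
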